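(* For any real continuous function $f\in C(\Omega)$, $[\mathcal D,\pi(M_f)]=0$ if and only if $f-f\circ\sigma=0$. The latter implies that $f$ is constant.
   Context: $\Omega=\{0,1\}^{\mathbb N}$ with the shift $\sigma$; for $a\in\{0,1\}$, $ax=(a,x_1,\dots)$. $\mu$ is the measure of maximal entropy (uniform Bernoulli product measure), $L^2(\mu)$ the Hilbert space of square-integrable functions. Ruelle operator $L\phi(x)=\frac12(\phi(0x)+\phi(1x))$; Koopman operator $K\phi=\phi\circ\sigma$. For $f\in C(\Omega)$, $M_f$ is multiplication $g\mapsto fg$ on $L^2(\mu)$. On $\mathcal H=L^2(\mu)\times L^2(\mu)$, $\mathcal D=\begin{pmatrix}0&K\\ L&0\end{pmatrix}$ and $\pi(A)=\begin{pmatrix}A&0\\0&A\end{pmatrix}$; $[\mathcal D,\pi(A)]=\mathcal D\pi(A)-\pi(A)\mathcal D$. *)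

(* Defs.v *)
From HB Require Import structures.
From mathcomp Require Import all_boot all_order all_algebra.
From mathcomp Require Import all_classical all_reals all_analysis.
Set Implicit Arguments. Unset Strict Implicit. Unset Printing Implicit Defensive.
Import Order.TTheory GRing.Theory Num.Theory.
Import numFieldTopology.Exports.
Local Open Scope classical_set_scope.
Local Open Scope ring_scope.

(* Omega = {0,1}^N, 0 ~ false, 1 ~ true. *)
Definition cylinder (n : nat) (w : nat -> bool) : set (nat -> bool) :=
  [set x | forall i, (i < n)%N -> x i = w i].

Definition cylinders : set (set (nat -> bool)) :=
  [set C | exists n w, C = cylinder n w].

(* Omega with the sigma-algebra generated by cylinder sets (= Borel sets of
   the product topology). Topologically, Omega is [cantor_space]. *)
Definition Omega : Type := g_sigma_algebraType cylinders.

Definition is_uniform_bernoulli {R : realType}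
  (mu : {measure set Omega -> \bar R}) : Prop :=
  forall (n : nat) (w : nat -> bool), mu (cylinder n w) = ((2%:R ^- n : R))%:E.

Definition shiftO (x : Omega) : Omega := fun n => x n.+1.
Definition pcons (a : bool) (x : Omega) : Omega :=
  fun n => if n is k.+1 then x k else a.

Section Ops.
Context {R : realType}.
Definition Koopman (g : Omega -> R) : Omega -> R := g \o shiftO.
Definition Ruelle (g : Omega -> R) : Omega -> R :=
  fun x => (g (pcons false x) + g (pcons true x)) / 2%:R.
Definition Mult (f g : Omega -> R) : Omega -> R := fun x => f x * g x.

Definition Dirac (h : (Omega -> R) * (Omega -> R)) : (Omega -> R) * (Omega -> R) :=
  (Koopman h.2, Ruelle h.1).
Definition piop (A : (Omega -> R) -> (Omega -> R))
  (h : (Omega -> R) * (Omega -> R)) : (Omega -> R) * (Omega -> R) :=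
  (A h.1, A h.2).
Definition commutator (A : (Omega -> R) -> (Omega -> R))
  (h : (Omega -> R) * (Omega -> R)) : (Omega -> R) * (Omega -> R) :=
  let u := Dirac (piop A h) in let v := piop A (Dirac h) in
  ((fun x => u.1 x - v.1 x), (fun x => u.2 x - v.2 x)).

(* [D, pi(M_f)] = 0 as an operator on H = L^2(mu) x L^2(mu):
   it sends every element of H to 0 (equality in L^2, i.e. mu-a.e.). *)
Definition commutator_vanishes (mu : {measure set Omega -> \bar R})
  (f : Omega -> R) : Prop :=
  forall g1 g2 : Omega -> R,
    g1 \in Lfun mu 2%:E -> g2 \in Lfun mu 2%:E ->
    (commutator (Mult f) (g1, g2)).1 = cst 0 %[ae mu] /\
    (commutator (Mult f) (g1, g2)).2 = cst 0 %[ae mu].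
End Ops.

Definition Ccont {R : realType} (f : Omega -> R) : Prop :=
  continuous (fun x : cantor_space => f x).

(* Main.v *)
Require Import Defs.
From HB Require Import structures.
From mathcomp Require Import all_boot all_order all_algebra.
From mathcomp Require Import all_classical all_reals all_analysis.
Import Order.TTheory GRing.Theory Num.Theory.
Import numFieldTopology.Exports.
Local Open Scope classical_set_scope.
Local Open Scope ring_scope.

Lemma cvg_cantor (u : nat -> Omega) (x : Omega) :
  (forall i, \forall n \near \oo, u n i = x i) -> (u @ \oo --> (x : cantor_space)).
Proof.
move=> hu.
apply/cvg_sup => i.
move=> A /=.
case => B [[C oC CB] Bx] sBA.
subst B.
move: (hu i); apply: filterS => n hn; apply: sBA; rewrite /= hn; exact: Bx.
Qed.

Lemma cont_seq (R : realType) (f : Omega -> R) (hf : Ccont f) (u : nat -> Omega) (x : Omega) :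
  (forall i, \forall n \near \oo, u n i = x i) -> ((f \o u) @ \oo --> (f x : R)).
Proof.
move=> hu; have h1 := (@cvg_cantor _ _ hu); have h2 := hf x; exact: (cvg_comp _ _ h1 h2).
Qed.

Lemma L2one (R : realType) (mu : {measure set Omega -> \bar R})
  (hmu : is_uniform_bernoulli mu) : cst (1:R) \in Lfun mu 2%:E.
Proof.
rewrite inE/=; apply/andP; split; rewrite inE//=.
rewrite /finite_norm unlock poweR_lty//.
under eq_integral => x _ do rewrite /= normr1 powR1.
rewrite integral_cst//=.
have -> : [set: Omega] = cylinder 0 (fun _ => false).
  by apply/seteqP; split => y //= _ i.
rewrite hmu expr0 invr1 mul1e; exact: ltry.
Qed.

Lemma cyl_meas n w : measurable (cylinder n w : set Omega).
Proof. by apply: sub_sigma_algebra; exists n, w. Qed.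

Lemma ae_cyl (R : realType) (mu : {measure set Omega -> \bar R})
  (hmu : is_uniform_bernoulli mu) (P : Omega -> Prop) :
  (\forall x \ae mu, P x) -> forall n w, exists y, cylinder n w y /\ P y.
Proof.
case=> N [mN muN sN] n w.
apply: contrapT => hn.
have sub : cylinder n w `<=` N.
  move=> y hy; apply: sN => /= Py; apply: hn; by exists y.
have e : mu (cylinder n w) = 0%E := subset_measure0 (cyl_meas n w) mN sub muN.
move: e; rewrite hmu => /eqP; rewrite eqe invr_eq0 expf_eq0 /= pnatr_eq0.
by case: n {hn sub}.
Qed.

Lemma iter_shift k (z : Omega) : iter k shiftO z = (fun i => z (i + k)%N).
Proof.
elim: k => [|k IH] /=; first by apply: funext => i; rewrite addn0.
by rewrite IH; apply: funext => i; rewrite /shiftO addSnnS.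
Qed.

Lemma f_iter (R : realType) (f : Omega -> R) (H : forall x, f x - f (shiftO x) = 0) k z :
  f z = f (iter k shiftO z).
Proof.
elim: k => [|k IH] //=; rewrite IH; apply/eqP; rewrite -subr_eq0; exact/eqP/H.
Qed.

Theorem lemma2p12 (R : realType) (mu : {measure set Omega -> \bar R})
  (hmu : is_uniform_bernoulli mu) (f : Omega -> R)
  (hf : Ccont f) :
  (commutator_vanishes mu f <-> (forall x, f x - f (shiftO x) = 0)) /\
  ((forall x, f x - f (shiftO x) = 0) -> exists c : R, forall x, f x = c).
Proof.
split; last first.
  move=> H; pose x0 : Omega := fun _ => false.
  exists (f x0) => y.
  pose u (n : nat) : Omega := fun i => if (i < n)%N then y i else x0 (i - n)%N.
  have fu n : f (u n) = f x0.
    rewrite (@f_iter _ _ H n) iter_shift; congr f; apply: funext => i.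
    by rewrite /u ltnNge leq_addl /= addnK.
  have hu : forall i, \forall n \near \oo, u n i = y i.
    move=> i; exists i.+1 => // n /= hn; by rewrite /u hn.
  have L := (@cont_seq _ _ hf _ _ hu).
  have E : f \o u = cst (f x0) by apply: funext => n; exact: fu.
  rewrite E in L.
  have C0 : cst (f x0) @ \oo --> f x0 by apply: cvg_cst.
  symmetry; apply: (@cvg_unique _ (@Rhausdorff R) _ _ _ _ C0 L).
split.
- move=> CV x.
  have [h1 _] := CV _ _ ((@L2one _ _ hmu)) ((@L2one _ _ hmu)).
  have := (@ae_cyl _ _ hmu _ h1) => /(_ _ x) ex.
  have [u hu] := choice ex.
  have hu1 : forall i, \forall n \near \oo, u n i = x i.
    move=> i; exists i.+1 => // n /= hn; by case: (hu n) => + _; apply.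
  have hu2 : forall i, \forall n \near \oo, (shiftO \o u) n i = shiftO x i.
    move=> i; exists i.+2 => // n /= hn; by case: (hu n) => + _; apply.
  have L : (fun n => f (u n) - f (shiftO (u n))) @ \oo --> f x - f (shiftO x).
    apply: cvgB; [exact: (@cont_seq _ _ hf _ _ hu1)|exact: (@cont_seq _ _ hf _ _ hu2)].
  have E : (fun n => f (u n) - f (shiftO (u n))) = cst 0.
    apply: funext => n; case: (hu n) => _ /(_ I).
    rewrite /commutator /Dirac /piop /Koopman /Mult /= !mulr1 => e.
    by apply/eqP; rewrite /= subr_eq0 eq_sym -subr_eq0; apply/eqP.
  rewrite E in L.
  have C0 : cst (0:R) @ \oo --> (0:R) by apply: cvg_cst.
  apply: (@cvg_unique _ (@Rhausdorff R) _ _ _ _ L C0).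
- move=> H g1 g2 _ _.
  have Hp a y : f (pcons a y) = f y.
    by move: (H (pcons a y)) => /eqP; rewrite subr_eq0 => /eqP.
  split; apply: aeW => y _ /=; rewrite /commutator /Dirac /piop /Koopman /Ruelle /Mult /=.
    have := H y; move=> /eqP; rewrite subr_eq0 => /eqP <-; exact: subrr.
  by rewrite !Hp -mulrDr mulrA subrr.
Qed.
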